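(* Let $\lambda:[0,\infty)\to(0,\infty)$ be continuous, let $n\ge 2$, and let $\{A(t)\}_{t\ge 0}$ be the ancestral process with variable population size with sample size $n$ and coalescent-rate function $\lambda$. Let $L(t)=\int_0^t \mathbb{1}_{\{A(s)>1\}}A(s)\,ds$, $T_{\mathrm{MRCA}}=\inf\{t\ge 0: A(t)\le 1\}$, $\mathcal{L}=L(T_{\mathrm{MRCA}})$, and $F_1(t,x)=\mathbb{P}\{A(t)=1,\,L(t)\le x\}$. Then for every $x\in[0,\infty)$ and every $\bar t\ge x/2$, \[ \mathbb{P}\{\mathcal{L}\le x\}=\mathbb{P}\{A(\bar t)=1,\,L(\bar t)\le x\}=F_1(\bar t,x). \]
   Context: The ancestral process with variable population size is the time-inhomogeneous Markov chain $\{A(t)\}_{t\ge0}$ on $\{1,\dots,n\}$ with $A(0)=n$ and infinitesimal generator $\lambda(t)Q$, where $Q$ is the $n\times n$ matrix with $Q_{k,k}=-\binom{k}{2}$, $Q_{k,k-1}=\binom{k}{2}$ and all other entries $0$; i.e. from state $k$ it jumps to $k-1$ at rate $\lambda(t)\binom{k}{2}$, and state $1$ is absorbing. $L(t)$ is the accumulated tree length and $\mathcal{L}$ the total tree length. *)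

(* Defs.v *)
From HB Require Import structures.
From mathcomp Require Import all_boot all_order all_algebra.
From mathcomp Require Import all_classical all_reals all_analysis.
Set Implicit Arguments. Unset Strict Implicit. Unset Printing Implicit Defensive.
Import Order.TTheory GRing.Theory Num.Theory.
Import numFieldNormedType.Exports.
Local Open Scope classical_set_scope.
Local Open Scope ring_scope.

Section Ancestral.
Variable R : realType.

Definition Qrate (n k l : nat) : R :=
  if [&& (1 <= k)%N, (k <= n)%N, (1 <= l)%N & (l <= n)%N] then
    (if l == k then - ('C(k, 2))%:R
     else if l == k.-1 then ('C(k, 2))%:R else 0)
  else 0.

(* Ptr s t i j = P(A(t) = j | A(s) = i) for 0 <= s <= t, states in {1..n}:
   the transition function of the Markov chain with generator lambda(t) Q,
   i.e. the solution of the Kolmogorov forward equation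
   d/dt Ptr(s,t) = Ptr(s,t) (lambda(t) Q),  Ptr(s,s) = I. *)
Definition kolmogorov_forward (n : nat) (lam : R -> R)
    (Ptr : R -> R -> nat -> nat -> R) : Prop :=
  forall s, 0 <= s -> forall i j, (1 <= i <= n)%N -> (1 <= j <= n)%N ->
    [/\ Ptr s s i j = (i == j)%:R,
        (fun u => Ptr s u i j) x @[x --> s^'+] --> Ptr s s i j &
        forall t, s < t ->
          is_derive t 1 (fun u => Ptr s u i j)
            (lam t * \sum_(1 <= k < n.+1) Ptr s t i k * Qrate n k j)].

(* {A(t)}_{t>=0} is the ancestral process with variable population size,
   sample size n and coalescent-rate function lam, on the probability
   space (Omega, P): integer valued cadlag paths in {1..n}, measurable
   marginals, and finite-dimensional distributions of the time-inhomogeneous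
   Markov chain started at A(0) = n with generator lam(t) Q. *)
Definition ancestral_process d (Omega : measurableType d)
    (P : probability Omega R) (n : nat) (lam : R -> R)
    (A : R -> Omega -> nat) : Prop :=
  [/\ (forall t k, 0 <= t -> measurable [set w | A t w = k]),
      (forall w t, 0 <= t -> (1 <= A t w <= n)%N),
      (* right-continuous paths (right-constant, since integer valued) *)
      (forall w t, 0 <= t -> exists2 e : R, 0 < e &
          forall u, t <= u -> u < t + e -> A u w = A t w),
      (forall w t, 0 < t -> exists2 e : R, 0 < e & exists c : nat,
          forall u, t - e < u -> u < t -> A u w = c) &
      exists Ptr : R -> R -> nat -> nat -> R,
        kolmogorov_forward n lam Ptr /\
        forall (m : nat) (s : nat -> R) (k : nat -> nat),
          s 0%N = 0 ->
          (forall j, (j < m)%N -> s j <= s j.+1) ->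
          (forall j, (j <= m)%N -> (1 <= k j <= n)%N) ->
          P [set w | forall j, (j <= m)%N -> A (s j) w = k j] =
          (((k 0%N == n)%:R *
             \prod_(j < m) Ptr (s j) (s j.+1) (k j) (k j.+1)) : R)%:E].

Definition branch_rate (Omega : Type) (A : R -> Omega -> nat) (w : Omega)
    (s : R) : R :=
  if (1 < A s w)%N then (A s w)%:R else 0.

Definition tree_length_upto (Omega : Type) (A : R -> Omega -> nat)
    (T : \bar R) (w : Omega) : \bar R :=
  (\int[@lebesgue_measure R]_(s in [set s : R | (0 <= s)%R /\ (s%:E <= T)%E])
     (branch_rate A w s)%:E)%E.

Definition tree_length (Omega : Type) (A : R -> Omega -> nat)
    (t : R) (w : Omega) : \bar R :=
  tree_length_upto A t%:E w.

(* T_MRCA = inf { t >= 0 : A(t) <= 1 }  (= +oo if the set is empty) *)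
Definition T_MRCA (Omega : Type) (A : R -> Omega -> nat) (w : Omega)
    : \bar R :=
  ereal_inf [set t%:E | t in [set t : R | 0 <= t /\ (A t w <= 1)%N]].

Definition total_tree_length (Omega : Type) (A : R -> Omega -> nat)
    (w : Omega) : \bar R :=
  tree_length_upto A (T_MRCA A w) w.

Definition F1 d (Omega : measurableType d) (P : probability Omega R)
    (A : R -> Omega -> nat) (t x : R) : \bar R :=
  P [set w | A t w = 1%N /\ (tree_length A t w <= x%:E)%E].

End Ancestral.

(* Main.v *)
Require Import Defs.
From HB Require Import structures.
From mathcomp Require Import all_boot all_order all_algebra.
From mathcomp Require Import all_classical all_reals all_analysis.
From mathcomp Require Import measurable_realfun.
From mathcomp Require Import zify ring lra.
Import Order.TTheory GRing.Theory Num.Theory.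
Import numFieldNormedType.Exports.
Local Open Scope classical_set_scope.
Local Open Scope ring_scope.
Section ODE.
Variable R : realType.
Variable n : nat.
Variable lam : R -> R.
Variable Ptr : R -> R -> nat -> nat -> R.

Lemma sumQ s t k : (1 <= k <= n)%N -> ((k < n)%N -> Ptr s t 1 k.+1 = 0) ->
  \sum_(1 <= j < n.+1) Ptr s t 1 j * Qrate R n j k = Ptr s t 1 k * - ('C(k, 2))%:R.
Proof.
move=> hk hk1.
rewrite (bigD1_seq k) /=; last exact: iota_uniq.
  2: by rewrite mem_index_iota; lia.
rewrite big1 ?addr0.
  by rewrite /Qrate hk eqxx andbT /=; case/andP: hk => -> ->.
move=> j hj; rewrite /Qrate.
case: ifP => //; last by rewrite mulr0.
move=> /and4P[h1 h2 h3 h4].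
rewrite eq_sym (negbTE hj).
case: ifP; last by rewrite mulr0.
move=> /eqP hkj.
have -> : j = k.+1 by lia.
rewrite hk1 ?mul0r //; lia.
Qed.
End ODE.
Section ODE2.
Variable R : realType.
Variable n : nat.
Variable lam : R -> R.
Variable Ptr : R -> R -> nat -> nat -> R.
Hypothesis KF : kolmogorov_forward n lam Ptr.
Hypothesis lpos : forall t, 0 <= t -> 0 < lam t.

Lemma ptr_step s k : 0 <= s -> (2 <= k <= n)%N ->
  ((k < n)%N -> forall t, s <= t -> Ptr s t 1 k.+1 = 0) ->
  forall t, s <= t -> Ptr s t 1 k = 0.
Proof.
move=> s0 hk hnext t st.
have hk' : (1 <= k <= n)%N by lia.
have h1 : (1 <= 1 <= n)%N by lia.
have [KF0 KFr KFd] := KF s s0 1 k h1 hk'.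
have f0 : Ptr s s 1 k = 0 by rewrite KF0; case: k hk {hnext hk' KFd KF0 KFr} => [|[|k]].
move: st; rewrite le_eqVlt => /predU1P[<-//|st].
set f := fun u => Ptr s u 1 k.
set C : R := ('C(k, 2))%:R.
have df : forall u, s < u -> is_derive u 1 f (lam u * (f u * - C)).
  move=> u su; have := KFd u su.
  by rewrite (@sumQ R n Ptr s u k hk') // => hkn; apply: hnext => //; exact: ltW.
have dg : forall u, s < u -> is_derive u (1:R) (f * f)%R
    (f u *: (lam u * (f u * - C)) + f u *: (lam u * (f u * - C))).
  by move=> u su; apply: is_deriveM; apply: df.
have cg : {within `[s, t], continuous (f * f)%R}.
  apply: derivable_oo_LRcontinuous_within; split.
  - move=> u; rewrite in_itv /= => /andP[su _].
    have := dg u su; by case.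
  - by apply: cvgM.
  - apply: cvg_at_left_filter.
    apply: differentiable_continuous; apply/derivable1_diffP.
    by have := dg t st; case.
have dg' : forall u, u \in `]s, t[ -> is_derive u (1:R) (f * f)%R
    (f u *: (lam u * (f u * - C)) + f u *: (lam u * (f u * - C))).
  by move=> u; rewrite in_itv /= => /andP[su _]; apply: dg.
have [c hc] := MVT st dg' cg.
have cs : s < c by rewrite (itvP hc).
have fs0 : f s * f s = 0 by rewrite /f f0 mulr0.
move=> hg; have {}hg : f t * f t - f s * f s = (f c *: (lam c * (f c * - C)) + f c *: (lam c * (f c * - C))) * (t - s) := hg.
rewrite fs0 subr0 in hg.
have lc : 0 < lam c by apply: lpos; rewrite ltW // (le_lt_trans s0).
have C0 : 0 <= C by [].
have : f t * f t <= 0.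
  rewrite hg; apply: mulr_le0_ge0; last by rewrite subr_ge0 ltW.
  rewrite /GRing.scale /= -mulrDr.
  have -> : lam c * (f c * - C) + lam c * (f c * - C) = - (2 * lam c * C * f c).
    ring.
  rewrite mulrN oppr_le0.
  have -> : f c * (2 * lam c * C * f c) = (2 * lam c * C) * (f c ^+ 2) by ring.
  apply: mulr_ge0; last exact: sqr_ge0.
  by apply: mulr_ge0 => //; apply: mulr_ge0 => //; exact: ltW.
rewrite -expr2 => h; apply/eqP; rewrite -sqrf_eq0 eq_le h sqr_ge0 //.
Qed.

Lemma ptr_absorb s : 0 <= s -> forall k, (2 <= k <= n)%N ->
  forall t, s <= t -> Ptr s t 1 k = 0.
Proof.
move=> s0.
suff H : forall m k, (2 <= k)%N -> (k + m = n)%N -> forall t, s <= t -> Ptr s t 1 k = 0.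
  by move=> k hk t st; apply: (H (n - k)%N k) => //; lia.
elim=> [|m IH] k hk hkm; apply: ptr_step => //; try lia.
by move=> hkn; apply: IH; lia.
Qed.
End ODE2.
Section Null.
Variable R : realType.
Variables (d : measure_display) (Omega : measurableType d).
Variable P : probability Omega R.
Variables (n : nat) (lam : R -> R) (A : R -> Omega -> nat).
Hypothesis lpos : forall t, 0 <= t -> 0 < lam t.
Hypothesis Hmeas : forall t k, 0 <= t -> measurable [set w | A t w = k].
Variable Ptr : R -> R -> nat -> nat -> R.
Hypothesis KF : kolmogorov_forward n lam Ptr.
Hypothesis Hfdd : forall (m : nat) (s : nat -> R) (k : nat -> nat),
          s 0%N = 0 ->
          (forall j, (j < m)%N -> s j <= s j.+1) ->
          (forall j, (j <= m)%N -> (1 <= k j <= n)%N) ->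
          P [set w | forall j, (j <= m)%N -> A (s j) w = k j] =
          (((k 0%N == n)%:R *
             \prod_(j < m) Ptr (s j) (s j.+1) (k j) (k j.+1)) : R)%:E.

Definition ssq (q r : R) (j : nat) : R := if j == 0%N then 0 else if j == 1%N then q else r.
Definition kkq (k0 k : nat) (j : nat) : nat := if j == 0%N then k0 else if j == 1%N then 1%N else k.

Definition Gset (x : rat * rat * nat * nat) : set Omega :=
  let: (q, r, k0, k) := x in
  if [&& (0 <= ratr q :> R), (ratr q <= ratr r :> R), (1 <= k0 <= n)%N & (2 <= k <= n)%N]
  then [set w | forall j, (j <= 2)%N -> A (ssq (ratr q) (ratr r) j) w = kkq k0 k j]
  else set0.

Lemma Gset_null x : P.-negligible (Gset x).
Proof.
case: x => [[[q r] k0] k]; rewrite /Gset.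
case: ifP => [/and4P[q0 qr hk0 hk]|_]; last exact: negligible_set0.
have mG : measurable [set w | forall j, (j <= 2)%N -> A (ssq (ratr q) (ratr r) j) w = kkq k0 k j].
  have -> : [set w | forall j, (j <= 2)%N -> A (ssq (ratr q) (ratr r) j) w = kkq k0 k j] =
     [set w | A 0 w = k0] `&` [set w | A (ratr q) w = 1%N] `&` [set w | A (ratr r) w = k].
    apply/seteqP; split => w /=.
      by move=> h; split; [split|]; [exact: (h 0%N)|exact: (h 1%N)|exact: (h 2%N)].
    by move=> [[h0 h1] h2] [|[|[|j]]].
  apply: measurableI; [apply: measurableI|]; apply: Hmeas => //.
  exact: le_trans qr.
apply/negligibleP => //.
have H := @Hfdd 2 (ssq (ratr q) (ratr r)) (kkq k0 k).
apply: (eq_trans (H _ _ _)); first by [].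
- by move=> [|[|j]] // _; rewrite /ssq.
- move=> [|[|[|j]]] // _; rewrite /kkq /=; lia.
- rewrite big_ord_recr big_ord_recr big_ord0.
  have -> : (ssq (ratr q) (ratr r) (@ord_max 1)) = ratr q by [].
  have -> : (ssq (ratr q) (ratr r) (@ord_max 1).+1) = ratr r by [].
  have -> : (kkq k0 k (@ord_max 1)) = 1%N by [].
  have -> : (kkq k0 k (@ord_max 1).+1) = k by [].
  rewrite (@ptr_absorb R n lam Ptr KF lpos (ratr q) q0 k hk (ratr r) qr).
  by rewrite /= !mulr0.
Qed.

Definition Nset : set Omega :=
  \bigcup_(i : nat) (if (unpickle i : option (rat * rat * nat * nat)) is Some x then Gset x else set0).

Lemma Nset_null : P.-negligible Nset.
Proof.
apply: negligible_bigcup => i.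
case: (unpickle i) => [x|]; [exact: Gset_null|exact: negligible_set0].
Qed.

Lemma Nset_mem q r k0 k w : (0 <= ratr q :> R) -> (ratr q <= ratr r :> R) ->
  (1 <= k0 <= n)%N -> (2 <= k <= n)%N ->
  A 0 w = k0 -> A (ratr q) w = 1%N -> A (ratr r) w = k -> Nset w.
Proof.
move=> q0 qr hk0 hk h0 h1 h2.
exists (pickle (q, r, k0, k)); first by [].
rewrite pickleK /Gset q0 qr hk0 hk.
move=> [|[|[|j]]] hj.
- exact: h0.
- exact: h1.
- exact: h2.
- by [].
Qed.
End Null.
Section Path.
Variable R : realType.
Variables (d : measure_display) (Omega : measurableType d).
Variables (n : nat) (A : R -> Omega -> nat).
Hypothesis Hmeas : forall t k, 0 <= t -> measurable [set w | A t w = k].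
Hypothesis Hrange : forall w t, 0 <= t -> (1 <= A t w <= n)%N.
Hypothesis Hrc : forall w t, 0 <= t -> exists2 e : R, 0 < e &
          forall u, t <= u -> u < t + e -> A u w = A t w.

Lemma TM_ge0 w : (0 <= T_MRCA A w)%E.
Proof. by apply/ereal_infP => y [u [u0 _] <-]; rewrite lee_fin. Qed.

Lemma TM_le w u : 0 <= u -> (A u w <= 1)%N -> (T_MRCA A w <= u%:E)%E.
Proof. by move=> u0 hu; apply: ereal_inf_lbound; exists u. Qed.

Lemma TM_lt w s : 0 <= s -> (s%:E < T_MRCA A w)%E -> (2 <= A s w)%N.
Proof.
move=> s0 hs; rewrite leqNgt; apply/negP => h.
have := TM_le w s s0 (h : (A s w <= 1)%N).
by rewrite leNgt hs.
Qed.

Lemma TM_char w s : 0 <= s -> (s%:E <= T_MRCA A w)%E <->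
  (forall q : rat, 0 <= (ratr q : R) -> ratr q < s -> (2 <= A (ratr q) w)%N).
Proof.
move=> s0; split.
  move=> hs q q0 qs; apply: (TM_lt w (ratr q)) => //.
  by apply: (lt_le_trans _ hs); rewrite lte_fin.
move=> h; rewrite leNgt; apply/negP => /ereal_inf_lt [y [u [u0 hu] <-]].
rewrite lte_fin => us.
have [e e0 he] := Hrc w u u0.
have : u < Num.min (u + e) s by rewrite lt_min us andbT ltrDl.
move=> /rat_in_itvoo [q]; rewrite in_itv /= lt_min => /andP[uq /andP[que qs]].
have q0 : 0 <= ratr q :> R by apply: le_trans u0 (ltW uq).
have := h q q0 qs; rewrite he //; last exact: ltW.
by move=> h2; move: hu; rewrite leqNgt (leq_trans _ h2).
Qed.

Lemma TM_attained w tau : T_MRCA A w = tau%:E -> A tau w = 1%N.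
Proof.
move=> ht.
have tau0 : 0 <= tau by rewrite -lee_fin -ht TM_ge0.
have [e e0 he] := Hrc w tau tau0.
have : (T_MRCA A w < (tau + e)%:E)%E by rewrite ht lte_fin ltrDl.
move=> /ereal_inf_lt [y [u [u0 hu] <-]]; rewrite lte_fin => ue.
have tu : tau <= u by rewrite -lee_fin -ht; apply: TM_le; first exact: u0.
rewrite -(he u) //.
have := Hrange w u u0; lia.
Qed.


Definition Jset k : set (Omega * measurableTypeR R) := [set p | 0 <= p.2 /\ A p.2 p.1 = k].

Definition Papprox (m k : nat) : set (Omega * measurableTypeR R) :=
  \bigcup_(j : nat) ([set w | A (j.+1%:R / m.+1%:R) w = k] `*`
                      `[j%:R / m.+1%:R, j.+1%:R / m.+1%:R[).

Lemma small_mesh (e : R) : 0 < e -> exists M : nat, forall m, (M <= m)%N -> 1 < e * m.+1%:R.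
Proof.
move=> e0; exists (Num.truncn (e^-1)) => m hm.
have ei : 0 <= e^-1 by rewrite invr_ge0 ltW.
have := truncn_itv ei => /andP[_ h].
have h2 : e^-1 < m.+1%:R.
  by apply: (lt_le_trans h); rewrite ler_nat.
by rewrite -ltr_pdivrMl // mulr1.
Qed.

Lemma Jset_eq k : Jset k = \bigcup_(M : nat) \bigcap_(m : nat) Papprox (M + m) k.
Proof.
apply/seteqP; split => [[w s] /= [s0 hk]|[w s] /= [M _ hM]].
  rewrite /= in s0 hk.
  have [e e0 he] := Hrc w s s0.
  have [M hM] := small_mesh e e0.
  exists M => // m _.
  set N : R := (M + m).+1%:R.
  have N0 : 0 < N by rewrite ltr0n.
  have eN : 1 < e * N by apply: hM; lia.
  set j := Num.truncn (s * N).
  have := truncn_itv (mulr_ge0 s0 (ltW N0)); rewrite -/j => /andP[hj1 hj2].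
  exists j => //; split => /=.
    rewrite he -?hk //.
      by rewrite ler_pdivlMr //; apply: ltW.
    rewrite ltr_pdivrMr // mulrDl -natr1; rewrite -natr1 in hj2.
    rewrite -/N; lra.
  rewrite in_itv /= ler_pdivrMr // ltr_pdivlMr // -/N hj1 /=.
  exact: hj2.
have [j _ [/= hAj]] := hM 0%N (I : setT 0%N).
rewrite in_itv /= => /andP[hs1 hs2].
have s0 : 0 <= s.
  apply: le_trans hs1; apply: divr_ge0; exact: ler0n.
have [e e0 he] := Hrc w s s0.
have [M' hM'] := small_mesh e e0.
have [j' _ [/= hAj']] := hM M' (I : setT M').
rewrite in_itv /= => /andP[hs1' hs2'].
split => //; rewrite -hAj' he //; first exact: ltW.
set N : R := (M + M').+1%:R in hs1' hs2' *.
have N0 : 0 < N by rewrite ltr0n.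
have eN : 1 < e * N by apply: hM'; lia.
rewrite ltr_pdivrMr // mulrDl.
rewrite ler_pdivrMr // in hs1'.
rewrite -natr1; lra.
Qed.

Lemma Jset_meas k : measurable (Jset k).
Proof.
rewrite Jset_eq; apply: bigcupT_measurable => M; apply: bigcapT_measurable => m.
apply: bigcupT_measurable => j; apply: measurableX; last exact: measurable_itv.
apply: Hmeas; apply: divr_ge0; exact: ler0n.
Qed.

Definition DD (Tf : Omega -> \bar R) : set (Omega * measurableTypeR R) :=
  [set p | 0 <= p.2 /\ (p.2%:E <= Tf p.1)%E].

Definition hfun (D : set (Omega * measurableTypeR R)) (p : Omega * measurableTypeR R) : \bar R :=
  (\sum_(2 <= k < n.+1) k%:R * \1_(Jset k `&` D) p)%:E.

Lemma hfun_in D p : D p -> 0 <= p.2 -> hfun D p = (branch_rate A p.1 p.2)%:E.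
Proof.
move=> hD p0; rewrite /hfun /branch_rate; congr (_%:E).
set a := A p.2 p.1.
have ha : (1 <= a <= n)%N by apply: Hrange.
have hmem : forall k, (p \in Jset k `&` D) = (a == k).
  move=> k; apply/idP/eqP => [/set_mem [[_ h] _] // | <-].
  by apply/mem_set; split.
under eq_bigr do rewrite indicE hmem.
case: ifP => h1.
  rewrite (bigD1_seq a) /=; [|by rewrite mem_index_iota; lia| exact: iota_uniq].
  rewrite eqxx mulr1 big1 ?addr0 // => k hk.
  by rewrite eq_sym (negbTE hk) mulr0.
rewrite big_seq big1 // => k; rewrite mem_index_iota => hk.
have -> : (a == k) = false by apply/negbTE/eqP => hak; rewrite hak in h1; lia.
by rewrite mulr0.
Qed.

Lemma hfun_out D p : ~ D p -> hfun D p = 0%E.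
Proof.
move=> hD; rewrite /hfun big1 // => k _.
by rewrite indicE memNset ?mulr0 // => -[].
Qed.

Lemma hfun_ge0 D p : (0 <= hfun D p)%E.
Proof.
rewrite /hfun lee_fin; apply: sumr_ge0 => k _; apply: mulr_ge0 => //.
Qed.

Lemma hfun_meas (D : set (Omega * measurableTypeR R)) : measurable D -> measurable_fun setT (hfun D).
Proof.
move=> mD; apply/measurable_EFinP; apply: measurable_sum => k.
apply: measurable_funM; first exact: measurable_cst.
apply: measurable_indic; apply: measurableI => //; exact: Jset_meas.
Qed.

Lemma tl_eq Tf w : tree_length_upto A (Tf w) w =
  fubini_F lebesgue_measure (hfun (DD Tf)) w.
Proof.
rewrite /tree_length_upto integral_mkcond /fubini_F; apply: eq_integral => s _.
rewrite /patch; case: ifPn => [/set_mem hs | hs].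
  by rewrite hfun_in //; case: hs.
rewrite hfun_out // => hD; move/negP: hs; apply; apply/mem_set; exact: hD.
Qed.

Lemma DDB_meas (tb : R) : measurable (DD (fun _ => tb%:E)).
Proof.
have -> : DD (fun _ => tb%:E) = setT `*` `[0, tb].
  apply/seteqP; split => [[w s]|[w s]] /=.
    by move=> [s0 hs]; split => //; rewrite in_itv /= s0 -lee_fin.
  by move=> [_]; rewrite in_itv /= => /andP[s0 hs]; split => //; rewrite lee_fin.
apply: measurableX => //; exact: measurable_itv.
Qed.

Definition Bad (q : rat) : set (Omega * measurableTypeR R) :=
  if (0 <= ratr q :> R) then
    (setT `*` `]ratr q, +oo[) `&`
    (([set w | A (ratr q) w = 0%N] `|` [set w | A (ratr q) w = 1%N]) `*` setT)
  else set0.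

Lemma DDC_meas : measurable (DD (T_MRCA A)).
Proof.
have -> : DD (T_MRCA A) = (setT `*` `[0, +oo[) `&` ~` \bigcup_(q : rat) Bad q.
  apply/seteqP; split => [[w s]|[w s]] /=.
    move=> [s0 hs]; split; first by rewrite in_itv /= s0.
    move=> [q _]; rewrite /Bad; case: ifP => // q0 [[_]].
    move=> qs [hA _].
    have {}qs : ratr q < s by move: qs => /=; rewrite in_itv /= andbT.
    have := (TM_char w s s0).1 hs q q0 qs.
    by case: hA => ->.
  rewrite in_itv /= andbT => -[[_ s0] hB]; split => //.
  apply/(TM_char w s s0) => q q0 qs.
  rewrite leqNgt; apply/negP => h; apply: hB; exists q => //.
  rewrite /Bad q0; split; split => //=; first by rewrite in_itv /= qs.
  by move: h; case: (A (ratr q) w) => [|[|]] //; [left|right].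
apply: measurableI; first by apply: measurableX => //; exact: measurable_itv.
apply: measurableC; apply: bigcupT_measurable_rat => q.
rewrite /Bad; case: ifP => // q0.
apply: measurableI; first by apply: measurableX => //; exact: measurable_itv.
by apply: measurableX => //; apply: measurableU; apply: Hmeas.
Qed.

Lemma tl_eqB tb w : tree_length A tb w =
  fubini_F lebesgue_measure (hfun (DD (fun _ => tb%:E))) w.
Proof. exact: (tl_eq (fun _ => tb%:E) w). Qed.

Lemma tl_eqC w : total_tree_length A w =
  fubini_F lebesgue_measure (hfun (DD (T_MRCA A))) w.
Proof. exact: (tl_eq (T_MRCA A) w). Qed.

Lemma sec_meas (D : set (Omega * measurableTypeR R)) w : measurable D ->
  measurable_fun setT (fun s : measurableTypeR R => hfun D (w, s)).
Proof.
move=> mD; exact: (measurableT_comp (hfun_meas D mD) (pair1_measurable w)).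
Qed.

Lemma B_sub_C x tb w : 0 <= tb -> A tb w = 1%N -> (tree_length A tb w <= x%:E)%E ->
  (total_tree_length A w <= x%:E)%E.
Proof.
move=> tb0 hA hx; rewrite tl_eqC; apply: le_trans hx; rewrite tl_eqB /fubini_F.
have Ttb : (T_MRCA A w <= tb%:E)%E by apply: TM_le => //; rewrite hA.
apply: ge0_le_integral => //.
- by move=> s _; exact: hfun_ge0.
- exact: sec_meas DDC_meas.
- exact: sec_meas (DDB_meas tb).
move=> s _.
have [hD|hD] := pselect (DD (T_MRCA A) (w, s)).
  have hD' : DD (fun _ => tb%:E) (w, s).
    by case: hD => s0 hs; split => //; apply: le_trans Ttb.
  by rewrite !hfun_in //; case: hD.
by rewrite hfun_out //; exact: hfun_ge0.
Qed.

Definition good w := forall u v, 0 <= u -> u <= v -> A u w = 1%N -> A v w = 1%N.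

Lemma C_sub x tb w : 0 <= x -> x / 2 <= tb -> good w ->
  (total_tree_length A w <= x%:E)%E ->
  A tb w = 1%N /\ (tree_length A tb w <= x%:E)%E.
Proof.
move=> x0 xtb gw hC.
have T0 := TM_ge0 w.
have Tx : (T_MRCA A w <= (x / 2)%:E)%E.
  rewrite leNgt; apply/negP => hT.
  have [r xr rT] : exists2 r : R, x / 2 < r & (r%:E < T_MRCA A w)%E.
    move: hT; case: (T_MRCA A w) => [tau| |] //.
      rewrite lte_fin => ht; exists ((x / 2 + tau) / 2); [|rewrite lte_fin]; lra.
    by move=> _; exists (x / 2 + 1); [lra | exact: ltry].
  have r0 : 0 <= r by apply: ltW; apply: le_lt_trans xr; lra.
  have : ((2 * r)%:E <= total_tree_length A w)%E.
    rewrite tl_eqC /fubini_F.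
    have -> : (2 * r)%:E = (\int[lebesgue_measure]_s (((fun _ : R => 2%:E) \_ (`[0%R, r] : set R)) s))%E.
      rewrite -integral_mkcond integral_cst; last exact: measurable_itv.
      have := lebesgue_measure_itv `[0%R, r]; rewrite /= lte_fin => ->.
      by case: ltP => h;
        [rewrite sube0 -EFinM | have -> : r = 0 by lra; rewrite mulr0 mule0].
    apply: ge0_le_integral => //.
    - by move=> s _; rewrite /patch; case: ifP.
    - apply/(measurable_restrictT _ _).1; first exact: measurable_itv.
      exact: measurable_cst.
    - exact: sec_meas DDC_meas.
    move=> s _; rewrite /patch; case: ifPn => [hs|_]; last exact: hfun_ge0.
    have := set_mem hs; rewrite /= in_itv /= => /andP[s0 sr].
    have sT : (s%:E < T_MRCA A w)%E by apply: le_lt_trans rT; rewrite lee_fin.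
    rewrite hfun_in //=; last by split => //; apply: ltW.
    rewrite /branch_rate lee_fin.
    have h2 := TM_lt w s s0 sT.
    by rewrite h2 ler_nat.
  move=> h; have := le_trans h hC; rewrite lee_fin; lra.
have [tau Etau] : exists tau, T_MRCA A w = tau%:E.
  move: T0 Tx; case: (T_MRCA A w) => [tau| |] //; by exists tau.
have tau0 : 0 <= tau by rewrite -lee_fin -Etau.
have taux : tau <= x / 2 by rewrite -lee_fin -Etau.
have Atau := TM_attained w tau Etau.
have Atb : A tb w = 1%N by apply: (gw tau) => //; apply: le_trans xtb.
split => //.
apply: le_trans hC; rewrite tl_eqB tl_eqC /fubini_F.
rewrite le_eqVlt; apply/orP; left; apply/eqP; apply: eq_integral => s _.
have [hD|hD] := pselect (DD (T_MRCA A) (w, s)).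
  have hD' : DD (fun _ => tb%:E) (w, s).
    case: hD => s0 hs; split => //; apply: le_trans hs _.
    by rewrite Etau lee_fin; apply: le_trans xtb.
  by rewrite !hfun_in //; case: hD.
rewrite (hfun_out _ _ hD).
have [hD'|hD'] := pselect (DD (fun _ => tb%:E) (w, s)); last by rewrite hfun_out.
case: hD' => s0 hs.
rewrite hfun_in; [|by split|exact: s0].
rewrite /= /branch_rate.
have ts : tau <= s.
  apply: ltW; rewrite ltNge -lee_fin -Etau; apply/negP => hs'; exact: hD.
by rewrite (gw tau s) //.
Qed.
End Path.

Lemma meas_le d (Omega : measurableType d) (R : realType) (f : Omega -> \bar R) (x : R) :
  measurable_fun setT f -> measurable [set w | (f w <= x%:E)%E].
Proof.
move=> mf; have := mf measurableT _ (emeasurable_itv `]-oo, x%:E]).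
rewrite setTI; congr measurable; apply/seteqP; split => w /=; rewrite in_itv /= => //.
Qed.

Theorem lemma1 (R : realType) (d : measure_display) (Omega : measurableType d)
    (P : probability Omega R) (lam : R -> R) (n : nat)
    (A : R -> Omega -> nat) :
  {within `[0, +oo[, continuous lam} ->
  (forall t, 0 <= t -> 0 < lam t) ->
  (2 <= n)%N ->
  ancestral_process P n lam A ->
  forall x tbar : R, 0 <= x -> x / 2 <= tbar ->
    P [set w | (total_tree_length A w <= x%:E)%E] =
      P [set w | A tbar w = 1%N /\ (tree_length A tbar w <= x%:E)%E] /\
    P [set w | A tbar w = 1%N /\ (tree_length A tbar w <= x%:E)%E] =
      F1 P A tbar x.
Proof.
move=> _ lpos n2 [Hmeas Hrange Hrc _ [Ptr [KF Hfdd]]] x tb x0 xtb.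
split; last by [].
have tb0 : 0 <= tb by apply: le_trans xtb; lra.
set B := [set w | A tb w = 1%N /\ (tree_length A tb w <= x%:E)%E].
set C := [set w | (total_tree_length A w <= x%:E)%E].
have mB : measurable B.
  have -> : B = [set w | A tb w = 1%N] `&` [set w | (tree_length A tb w <= x%:E)%E] by [].
  apply: measurableI; first exact: Hmeas.
  apply: meas_le.
  have -> : tree_length A tb = fubini_F lebesgue_measure (hfun R d Omega n A (DD R d Omega (fun _ => tb%:E))).
    by apply/funext => w; exact: (tl_eqB R d Omega n A Hrange tb w).
  apply: measurable_fun_fubini_tonelli_F; last by move=> p; exact: hfun_ge0.
  exact: (hfun_meas R d Omega n A Hmeas Hrc _ (DDB_meas R d Omega tb)).
have mC : measurable C.
  apply: meas_le.
  have -> : total_tree_length A = fubini_F lebesgue_measure (hfun R d Omega n A (DD R d Omega (T_MRCA A))).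
    by apply/funext => w; exact: (tl_eqC R d Omega n A Hrange w).
  apply: measurable_fun_fubini_tonelli_F; last by move=> p; exact: hfun_ge0.
  exact: (hfun_meas R d Omega n A Hmeas Hrc _ (DDC_meas R d Omega A Hmeas Hrc)).
have BC : B `<=` C by move=> w [hA hx]; exact: (B_sub_C R d Omega n A Hmeas Hrange Hrc x tb w tb0 hA hx).
have CBN : C `\` B `<=` Nset R d Omega n A.
  move=> w [hC hnB]; apply: contrapT => hN; apply: hnB.
  apply: (C_sub R d Omega n A Hmeas Hrange Hrc x tb w x0 xtb) => //.
  move=> u v u0 uv hu; apply: contrapT => hv.
  have v0 : 0 <= v by apply: le_trans uv.
  set k := A v w.
  have hk : (2 <= k <= n)%N.
    have := Hrange w v v0; rewrite -/k => hr.
    have hv' : k <> 1%N by [].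
    lia.
  have [e1 e10 he1] := Hrc w u u0.
  have [e2 e20 he2] := Hrc w v v0.
  have : u < Num.min (u + e1) (v + e2) by rewrite lt_min ltrDl e10 /=; apply: le_lt_trans uv _; rewrite ltrDl.
  move=> /rat_in_itvoo [q]; rewrite in_itv /= lt_min => /andP[uq /andP[que qve]].
  have : Num.max v (ratr q) < v + e2 by rewrite gt_max qve ltrDl e20.
  move=> /rat_in_itvoo [r]; rewrite in_itv /= gt_max => /andP[/andP[vr qr] rve].
  apply: hN; apply: (Nset_mem R d Omega n A q r (A 0 w) k w) => //.
  - exact: le_trans u0 (ltW uq).
  - exact: ltW.
  - exact: Hrange.
  - by rewrite he1 //; exact: ltW.
  - by rewrite he2 //; exact: ltW.
have -> : C = B `|` (C `\` B) by rewrite setDUK.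
rewrite measureU //; last 2 first.
- exact: measurableD.
- by rewrite setDIK.
have h0 : P (C `\` B) = 0%E.
  apply: measure_negligible; first exact: measurableD.
  exact: (negligibleS CBN (Nset_null R d Omega P n lam A lpos Hmeas Ptr KF Hfdd)).
transitivity (P B + 0)%E; last by rewrite adde0.
congr (_ + _)%E; exact: h0.
Qed.
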